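(* Every finitely generated free partially commutative monoid is isomorphic to an automaton semigroup.
   Context: A free partially commutative monoid is a monoid with presentation $\langle X\mid R\rangle$, $X=\{x_1,\dots,x_n\}$ finite, where $R\subseteq\{(x_ix_j,x_jx_i)\}$. A synchronous automaton is $(Q,\Sigma,t,o)$ with $Q$ a finite set of states, $\Sigma$ a finite alphabet, $t:Q\times\Sigma\to Q$ and $o:Q\times\Sigma\to\Sigma$. Each state $q$ induces $q:\Sigma^*\to\Sigma^*$ by $q(\emptyset)=\emptyset$, $q(\sigma w)=o(q,\sigma)\,q'(w)$ with $q'=t(q,\sigma)$. An automaton semigroup is the semigroup of maps $\Sigma^*\to\Sigma^*$ generated under composition by the states of a synchronous automaton. *)

(* Defs.v *)
From mathcomp Require Import all_boot.
From Stdlib Require Import Relations.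
Set Implicit Arguments. Unset Strict Implicit. Unset Printing Implicit Defensive.

(* Generators x_0,...,x_{n-1} are the elements of 'I_n; words are seq 'I_n.
   comm i j means the relation (x_i x_j, x_j x_i) belongs to R. *)
Inductive fpc_step (n : nat) (comm : rel 'I_n) : seq 'I_n -> seq 'I_n -> Prop :=
  | FpcStep (u v : seq 'I_n) (a b : 'I_n) :
      comm a b -> fpc_step comm (u ++ a :: b :: v) (u ++ b :: a :: v).

(* The congruence generated by R: the monoid <X | R> is seq 'I_n modulo this
   relation, with concatenation as product and [::] as identity. *)
Definition fpc_equiv (n : nat) (comm : rel 'I_n) : relation (seq 'I_n) :=
  clos_refl_sym_trans _ (fpc_step comm).

Record automaton (Q Sigma : finType) := Automaton {
  trans : Q -> Sigma -> Q;
  out   : Q -> Sigma -> Sigma }.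

Fixpoint state_map (Q Sigma : finType) (A : automaton Q Sigma) (q : Q)
    (w : seq Sigma) : seq Sigma :=
  match w with
  | [::] => [::]
  | s :: w' => out A q s :: state_map A (trans A q s) w'
  end.

(* The composite of the maps of a word of states: [:: q1; ...; qk] acts as
   q1 \o ... \o qk. Elements of the automaton semigroup are exactly the
   maps word_map A p for nonempty p. *)
Definition word_map (Q Sigma : finType) (A : automaton Q Sigma) (p : seq Q) :
    seq Sigma -> seq Sigma :=
  foldr (fun q f => state_map A q \o f) id p.

(* The monoid <X | comm> is isomorphic to the automaton semigroup S(A):
   phi sends a word of generators to a nonempty word of states representing an
   element of S(A); the induced map M -> S(A) is well-defined and injective,
   a homomorphism, and surjective. *)
Definition fpc_iso_automaton_semigroup (n : nat) (comm : rel 'I_n)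
    (Q Sigma : finType) (A : automaton Q Sigma) : Prop :=
  exists phi : seq 'I_n -> seq Q,
    [/\ forall u, phi u != [::],
        forall u v, fpc_equiv comm u v <-> word_map A (phi u) =1 word_map A (phi v),
        forall u v, word_map A (phi (u ++ v)) =1 word_map A (phi u) \o word_map A (phi v)
      & forall p : seq Q, p != [::] -> exists u, word_map A (phi u) =1 word_map A p].

(* Main.v *)
Require Import Defs.
From mathcomp Require Import all_boot.
From Stdlib Require Import Relations.
Set Implicit Arguments. Unset Strict Implicit. Unset Printing Implicit Defensive.

Section S.
Variables (n : nat) (comm : rel 'I_n).

Notation eqv := (fpc_equiv comm).

Lemma eqv_refl u : eqv u u. Proof. exact: rst_refl. Qed.
Lemma eqv_sym u v : eqv u v -> eqv v u. Proof. exact: rst_sym. Qed.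
Lemma eqv_trans u v w : eqv u v -> eqv v w -> eqv u w. Proof. exact: rst_trans. Qed.

Lemma eqv_cat a b u v : eqv u v -> eqv (a ++ u ++ b) (a ++ v ++ b).
Proof.
elim=> [x y st| x | x y _ IH | x y z _ IH1 _ IH2].
- apply: rst_step; case: st => p q c d H.
  have -> : a ++ (p ++ [:: c, d & q]) ++ b = (a ++ p) ++ [:: c, d & q ++ b] by rewrite -!catA.
  have -> : a ++ (p ++ [:: d, c & q]) ++ b = (a ++ p) ++ [:: d, c & q ++ b] by rewrite -!catA.
  by constructor.
- exact: eqv_refl.
- exact: eqv_sym.
- exact: eqv_trans IH2.
Qed.

Lemma eqv_cons c u v : eqv u v -> eqv (c :: u) (c :: v).
Proof. by move/(eqv_cat [:: c] [::]); rewrite !cats0. Qed.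
Lemma eqv_catr b u v : eqv u v -> eqv (u ++ b) (v ++ b).
Proof. exact: (eqv_cat [::] b). Qed.
Lemma eqv_catl a u v : eqv u v -> eqv (a ++ u) (a ++ v).
Proof. by move/(eqv_cat a [::]); rewrite !cats0. Qed.

Definition commut a b := comm a b || comm b a.
Lemma commutC a b : commut a b = commut b a.
Proof. by rewrite /commut orbC. Qed.

Lemma eqv_swap a b t : commut a b -> eqv (a :: b :: t) (b :: a :: t).
Proof.
case/orP=> H.
- by apply: rst_step; exact: (FpcStep [::] t H).
- by apply: rst_sym; apply: rst_step; exact: (FpcStep [::] t H).
Qed.

Lemma eqv_move i s t : all (commut i) s -> eqv (s ++ i :: t) (i :: s ++ t).
Proof.
elim: s => [|x s IH] /=; first by move=> _; exact: eqv_refl.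
case/andP=> Hx Hs; apply: eqv_trans (eqv_cons x (IH Hs)) _.
by apply: eqv_swap; rewrite commutC.
Qed.

Lemma eqv_filter i (P : pred 'I_n) r : ~~ P i -> all (commut i) (filter P r) ->
  eqv (filter (fun j => (j == i) || P j) r) (nseq (count_mem i r) i ++ filter P r).
Proof.
move=> nPi; elim: r => [|x r IH] /=; first by move=> _; exact: eqv_refl.
case: (eqVneq x i) => [->|nxi] /=.
  by rewrite (negbTE nPi) => H; apply: eqv_cons; apply: IH.
rewrite add0n; case: (boolP (P x)) => Px /=; last exact: IH.
case/andP=> cx Hr; apply: eqv_trans (eqv_cons x (IH Hr)) _.
apply: eqv_sym; apply: eqv_move.
by apply/allP=> y /nseqP [-> _]; rewrite commutC.
Qed.

Definition nb i j := (j == i) || ~~ commut i j.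
Definition Sig := {ffun 'I_n -> option bool}.
Definition allblank i (s : Sig) : bool := [forall j, nb i j ==> (s j == None)].
Definition fullblank (s : Sig) : bool := [forall j, s j == None].
Definition newcol i (s : Sig) : option bool :=
  if allblank i s then Some true else if s i is None then Some false else s i.
Definition fillc i (s : Sig) : Sig := [ffun j => if j == i then newcol i s else s j].
Definition tr (q : option 'I_n) (s : Sig) : option 'I_n :=
  if q is Some i then (if allblank i s then None else Some i) else None.
Definition ot (q : option 'I_n) (s : Sig) : Sig :=
  if q is Some i then fillc i s else s.
Definition A : automaton (option 'I_n) Sig := Automaton tr ot.

Lemma sm_none w : state_map A None w = w.
Proof. by elim: w => //= c w ->. Qed.

Lemma wm_cat p q : word_map A (p ++ q) =1 word_map A p \o word_map A q.
Proof. by elim: p => //= x p IH w; exact: (congr1 (state_map A x) (IH w)). Qed.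

Lemma allblank_fill a b c : ~~ nb a b -> allblank a (fillc b c) = allblank a c.
Proof.
move=> H; apply: eq_forallb => j; rewrite ffunE.
case: (eqVneq j b) => // ->; by rewrite (negbTE H).
Qed.

Lemma sm_comm a b (x y : bool) w : a != b -> ~~ nb a b -> ~~ nb b a ->
  state_map A (if x then Some a else None) (state_map A (if y then Some b else None) w) =
  state_map A (if y then Some b else None) (state_map A (if x then Some a else None) w).
Proof.
move=> nab Hab Hba; elim: w x y => [|c w IH] x y //.
case: x; last by rewrite !sm_none.
case: y; last by rewrite !sm_none.
rewrite /= !allblank_fill //; congr (_ :: _).
  apply/ffunP=> j; rewrite !ffunE /newcol !allblank_fill //.
  case: (eqVneq j a) => [->|nja].
    by rewrite !ffunE !(negbTE nab).
  have [Ej|njb] := eqVneq j b.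
    by rewrite !ffunE eq_sym !(negbTE nab).
  by [].
have := IH (~~ allblank a c) (~~ allblank b c).
by case: (allblank a c); case: (allblank b c).
Qed.

Definition row (c : Sig) : seq 'I_n := [seq j <- enum 'I_n | c j == Some true].
Fixpoint D (C : seq Sig) : seq 'I_n := if C is c :: C' then D C' ++ row c else [::].
Fixpoint valid (C : seq Sig) : bool :=
  if C is c :: C' then
    [forall j, (c j == None) ==> all (fun d : Sig => d j == None) C'] && valid C'
  else true.

Lemma sm_some i c C : state_map A (Some i) (c :: C) =
  fillc i c :: (if allblank i c then C else state_map A (Some i) C).
Proof. by rewrite /=; case: (allblank i c) => //; rewrite sm_none. Qed.

Lemma col_sm i j C : j != i ->
  map (fun d : Sig => d j) (state_map A (Some i) C) = map (fun d : Sig => d j) C.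
Proof.
move=> nji; elim: C => [|c C IH] //; rewrite sm_some /= ffunE (negbTE nji).
by case: (allblank i c) => //; rewrite IH.
Qed.

Lemma newcol_nN i c : newcol i c != None.
Proof. by rewrite /newcol; case: (allblank i c) => //; case: (c i). Qed.

Lemma valid_sm i C : valid C -> valid (state_map A (Some i) C).
Proof.
elim: C => [|c C IH] //; rewrite sm_some /= => /andP [Hc HC].
apply/andP; split; last by case: (allblank i c) => //; exact: IH.
apply/forallP=> j; rewrite ffunE.
case: (eqVneq j i) => [->|nji]; first by rewrite (negbTE (newcol_nN i c)).
apply/implyP=> Hj; have := implyP (forallP Hc j) Hj.
case: (allblank i c) => //.
by rewrite -!(all_map (fun d : Sig => d j) (pred1 None)) col_sm.
Qed.

Lemma fill_nfb i c : ~~ fullblank (fillc i c).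
Proof.
apply/negP=> /forallP /(_ i); rewrite ffunE eqxx.
by rewrite (negbTE (newcol_nN i c)).
Qed.

Lemma fb_ab i c : fullblank c -> allblank i c.
Proof. by move/forallP=> H; apply/forallP=> j; rewrite H implybT. Qed.

Lemma count_sm i C : count fullblank C <= (count fullblank (state_map A (Some i) C)).+1.
Proof.
elim: C => [|c C IH] //; rewrite sm_some /= (negbTE (fill_nfb i c)) add0n.
case: (boolP (allblank i c)) => Hab.
  by case: (fullblank c).
have -> : fullblank c = false by apply/negP=> /(fb_ab i); rewrite (negbTE Hab).
exact: IH.
Qed.

Lemma row_comm i d : allblank i d -> all (commut i) (row d).
Proof.
move/forallP=> H; apply/allP=> j; rewrite mem_filter => /andP [Hj _].
have := H j; case: (boolP (nb i j)) => [_ /= /eqP E|]; first by rewrite E in Hj.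
by rewrite /nb negb_or negbK => /andP [_ ->].
Qed.

Lemma D_comm i C : all (allblank i) C -> all (commut i) (D C).
Proof.
elim: C => [|c C IH] //= /andP [Hc HC]; rewrite all_cat IH //.
exact: row_comm.
Qed.

Lemma row_fill_nab i c : ~~ allblank i c -> row (fillc i c) = row c.
Proof.
move=> H; apply: eq_filter => j; rewrite ffunE.
case: (eqVneq j i) => [->|//]; rewrite /newcol (negbTE H).
by case: (c i).
Qed.

Lemma row_fill_ab i c : allblank i c -> eqv (row (fillc i c)) (i :: row c).
Proof.
move=> H.
have ci : c i = None.
  by apply/eqP; have := forallP H i; rewrite /nb eqxx.
have -> : row (fillc i c) = [seq j <- enum 'I_n | (j == i) || (c j == Some true)].
  apply: eq_filter => j; rewrite ffunE.
  by case: (eqVneq j i) => [->|//]; rewrite /newcol H.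
have := @eqv_filter i (fun j => c j == Some true) (enum 'I_n).
rewrite ci count_uniq_mem ?enum_uniq // mem_enum /=.
by move=> X; apply: X => //; exact: row_comm.
Qed.

Lemma D_step i C : valid C -> has fullblank C ->
  eqv (D (state_map A (Some i) C)) (i :: D C).
Proof.
elim: C => [|c C IH] //; rewrite sm_some /= => /andP [Hc HC] Hfb.
case: (boolP (allblank i c)) => Hab.
  apply: eqv_trans (eqv_catl _ (row_fill_ab Hab)) _.
  apply: eqv_move; apply: D_comm; apply/allP=> d dC.
  apply/forallP=> j; apply/implyP=> nj.
  have := forallP Hab j; rewrite nj /= => cj.
  by have := allP (implyP (forallP Hc j) cj) d dC.
rewrite row_fill_nab // -cat_cons; apply: eqv_catr; apply: IH => //.
move: Hfb; case: (boolP (fullblank c)) => //= Hf.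
by move: Hab; rewrite fb_ab.
Qed.

Definition blankc : Sig := [ffun _ => None].

Lemma blank_props L : [/\ valid (nseq L blankc), count fullblank (nseq L blankc) = L
  & D (nseq L blankc) = [::]].
Proof.
have fb : fullblank blankc by apply/forallP=> j; rewrite ffunE.
have rb : row blankc = [::].
  by rewrite /row -(filter_pred0 (enum 'I_n)); apply: eq_filter => j; rewrite ffunE.
elim: L => [|L [IH1 IH2 IH3]] //=; rewrite IH1 IH2 IH3 rb fb; split => //.
rewrite andbT; apply/forallP=> j; apply/implyP=> _; apply/allP=> d /nseqP [-> _].
by rewrite ffunE.
Qed.

Lemma inv L u : size u <= L ->
  [/\ valid (word_map A (map Some u) (nseq L blankc)),
      L - size u <= count fullblank (word_map A (map Some u) (nseq L blankc))
    & eqv (D (word_map A (map Some u) (nseq L blankc))) u].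
Proof.
elim: u => [|a u IH] /= Hs.
  by case: (blank_props L) => H1 H2 H3; rewrite H1 H2 H3 subn0; split => //; exact: eqv_refl.
have Hs' : size u <= L by apply: ltnW.
case: (IH Hs') => H1 H2 H3; split.
- exact: valid_sm.
- by rewrite subnS -subn1 leq_subLR add1n; exact: leq_trans H2 (count_sm _ _).
- apply: eqv_trans (D_step a H1 _) (eqv_cons a H3).
  by rewrite has_count; apply: leq_trans H2; rewrite subn_gt0.
Qed.
End S.

Lemma wm_phi n (comm : rel 'I_n) u :
  word_map (A comm) (None :: map Some u) =1 word_map (A comm) (map Some u).
Proof. by move=> w /=; rewrite sm_none. Qed.

Lemma wm_pmap n (comm : rel 'I_n) p :
  word_map (A comm) (map Some (pmap id p)) =1 word_map (A comm) p.
Proof.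
elim: p => [|[a|] p IH] w //=; last by rewrite sm_none IH.
by rewrite IH.
Qed.

Theorem mainTheorem19 :
  forall (n : nat) (comm : rel 'I_n),
    exists (Q Sigma : finType) (A : automaton Q Sigma),
      fpc_iso_automaton_semigroup comm A.
Proof.
move=> n comm; exists (option 'I_n), (Sig n), (A comm).
exists (fun u => None :: map Some u); split.
- by [].
- move=> u v; split.
  + move=> H w; rewrite !wm_phi; move: w; elim: H.
    * move=> x y [p q a b H] w; rewrite !map_cat !wm_cat /=; congr (word_map _ _ _).
      case: (eqVneq a b) => [->//|nab].
      have Hc : commut comm a b by rewrite /commut H.
      have := @sm_comm n comm a b true true (word_map (A comm) (map Some q) w) nab.
      rewrite /nb /= eq_sym (negbTE nab) [commut comm b a]commutC Hc /=.
      by move=> X; apply: X.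
    * by [].
    * by move=> x y _ IH w; rewrite IH.
    * by move=> x y z _ IH1 _ IH2 w; rewrite IH1 IH2.
  + move=> H.
    have Lu : size u <= (size u + size v).+1 by apply: leq_trans (leq_addr (size v) _) (leqnSn _).
    have Lv : size v <= (size u + size v).+1 by apply: leq_trans (leq_addl (size u) _) (leqnSn _).
    have [_ _ Hu] := inv comm Lu.
    have [_ _ Hv] := inv comm Lv.
    have E := H (nseq (size u + size v).+1 (blankc n)); rewrite !wm_phi in E.
    rewrite E in Hu; exact: eqv_trans (eqv_sym Hu) Hv.
- move=> u v w /=; rewrite !sm_none map_cat; exact: wm_cat.
- move=> p _; exists (pmap id p) => w; rewrite wm_phi; exact: wm_pmap.
Qed.
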